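(* Let $r\ge5$, let $T$ be a $K_r$-tree, let $G$ be a graph, and let $S=V(G)\cap V(T)$. Then, for any run of the $(r-2)_*$-BP process on $T$ with seed set $S$, every copy $\tilde H$ of $K_r$ that is completed by the $K_r$-dynamics started from $G\cup T$ satisfies $V(\tilde H)\subseteq V(G)\cup\langle S;T\rangle_*$.
   Context: A graph $T$ is a $K_r$-tree if it is the union of copies $H_1,\dots,H_\vartheta$ of $K_r$ such that for each $1<i\le\vartheta$, $H_i$ shares exactly one edge with $H_1\cup\cdots\cup H_{i-1}$ (the common vertices being exactly the two endpoints of that edge). An edge of $T$ is internal if it lies in at least two of the $H_i$. The $(r-2)_*$-bootstrap percolation process on $T$ with seed set $S\subseteq V(T)$: initially the vertices of $S$ are infected; in each step, either (usual step) some uninfected vertex with at least $r-2$ infected neighbors in $T$ becomes infected; or else (special step), if no usual step is possible but for some internal edge $f$ there are two copies $H_i\ne H_j$ containing $f$ such that $H_i$ has $r-4$ infected vertices and $H_j$ has $1$ infected vertex, all these $r-3$ vertices not in $f$, then an arbitrarily chosen vertex $u\in f$ becomes infected; otherwise the process terminates. $\langle S;T\rangle_*$ is the set of eventually infected vertices. The $K_r$-dynamics on a graph repeatedly adds an edge $e$ whenever there is a copy of $K_r$ in which $e$ is the only missing edge; such a copy is said to be completed by the dynamics (when $e$ is added). *)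

(* Defs.v *)
(* Graphs on an ambient finite vertex type V:
   a graph is a vertex set W : {set V} and an edge set E : {set {set V}}
   of 2-element subsets of W. *)
From mathcomp Require Import all_boot.
Set Implicit Arguments. Unset Strict Implicit. Unset Printing Implicit Defensive.

Section Defs.
Variable V : finType.

Definition pairs_in (X : {set V}) : {set {set V}} :=
  [set e : {set V} | (#|e| == 2) && (e \subset X)].

Definition is_graph (W : {set V}) (E : {set {set V}}) : Prop :=
  forall e, e \in E -> #|e| = 2 /\ e \subset W.

(* A K_r-tree given by its copies H_1, ..., H_theta (vertex sets of the copies of K_r). *)
Definition Kr_tree (r : nat) (Hs : seq {set V}) : Prop :=
  0 < size Hs /\
  (forall i, i < size Hs -> #|nth set0 Hs i| = r) /\
  (forall i, 0 < i < size Hs ->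
     exists e, e \in pairs_in (nth set0 Hs i) /\
       (exists j, j < i /\ e \subset nth set0 Hs j) /\
       nth set0 Hs i :&: (\bigcup_(K <- take i Hs) K) = e).

Definition Tverts (Hs : seq {set V}) : {set V} := \bigcup_(H <- Hs) H.
Definition Tedges (Hs : seq {set V}) : {set {set V}} :=
  [set e : {set V} | (#|e| == 2) && has (fun H : {set V} => e \subset H) Hs].

Definition internal_edge (Hs : seq {set V}) (f : {set V}) : Prop :=
  f \in Tedges Hs /\
  exists i j, [/\ i < size Hs, j < size Hs, i <> j,
                  f \subset nth set0 Hs i & f \subset nth set0 Hs j].

Definition bp_usual (r : nat) (Hs : seq {set V}) (A : {set V}) (v : V) : Prop :=
  [/\ v \in Tverts Hs, v \notin A &
      r - 2 <= #|[set w in A | [set v; w] \in Tedges Hs]| ].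

(* special step (its precondition that no usual step is possible is added in bp_step) *)
Definition bp_special (r : nat) (Hs : seq {set V}) (A : {set V}) (u : V) : Prop :=
  exists f i j,
    internal_edge Hs f /\ i < size Hs /\ j < size Hs /\ i <> j /\
    f \subset nth set0 Hs i /\ f \subset nth set0 Hs j /\
    #|nth set0 Hs i :&: A| = r - 4 /\ #|nth set0 Hs j :&: A| = 1 /\
    [disjoint (nth set0 Hs i :&: A) :|: (nth set0 Hs j :&: A) & f] /\ u \in f.

Definition bp_step (r : nat) (Hs : seq {set V}) (A : {set V}) (v : V) : Prop :=
  bp_usual r Hs A v \/
  ((~ exists w, bp_usual r Hs A w) /\ bp_special r Hs A v).

Fixpoint bp_path (r : nat) (Hs : seq {set V}) (A : {set V}) (vs : seq V) : Prop :=
  match vs with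
  | [::] => True
  | v :: vs' => bp_step r Hs A v /\ bp_path r Hs (v |: A) vs'
  end.

(* A is the final infected set <S;T>_* of some (terminated) run of the process *)
Definition bp_run (r : nat) (Hs : seq {set V}) (S A : {set V}) : Prop :=
  exists vs, [/\ bp_path r Hs S vs, A = S :|: [set x in vs] &
                 ~ exists v, bp_step r Hs A v].

Definition dyn_completes (r : nat) (W : {set V}) (E : {set {set V}})
    (e X : {set V}) : Prop :=
  [/\ X \subset W, #|X| = r, e \in pairs_in X, e \notin E &
      forall f, f \in pairs_in X -> f != e -> f \in E].

Definition dyn_step (r : nat) (W : {set V}) (E : {set {set V}}) (e : {set V}) : Prop :=
  exists X, dyn_completes r W E e X.

Fixpoint dyn_path (r : nat) (W : {set V}) (E : {set {set V}}) (es : seq {set V}) : Prop :=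
  match es with
  | [::] => True
  | e :: es' => dyn_step r W E e /\ dyn_path r W (e |: E) es'
  end.

Definition completed_copy (r : nat) (W : {set V}) (E0 : {set {set V}}) (X : {set V}) : Prop :=
  exists es e, dyn_path r W E0 es /\ dyn_completes r W (E0 :|: [set x in es]) e X.

End Defs.

(* Main.v *)
Require Import Defs.
From mathcomp Require Import all_boot zify.
Set Implicit Arguments. Unset Strict Implicit. Unset Printing Implicit Defensive.

Definition adjT (V : finType) (Hs : seq {set V}) (u v : V) := [set u; v] \in Tedges Hs.

Definition adjk (V : finType) (Hs : seq {set V}) k (u v : V) :=
  u != v /\ exists j, [/\ j < k, j < size Hs & [set u; v] \subset nth set0 Hs j].

Definition UU (V : finType) (Hs : seq {set V}) k := \bigcup_(K <- take k Hs) K.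

Lemma inU (V : finType) (Hs : seq {set V}) k v :
  v \in UU Hs k <-> exists j, [/\ j < k, j < size Hs & v \in nth set0 Hs j].
Proof.
rewrite /UU bigcup_seq; split.
  case/bigcupP => K /(nthP set0) [j]; rewrite size_take_min leq_min => /andP [jk js].
  rewrite nth_take // => <- vK; exists j; split => //.
move=> [j [jk js vj]]; apply/bigcupP; exists (nth set0 Hs j) => //.
rewrite -(nth_take _ jk); apply: mem_nth; by rewrite size_take_min leq_min jk js.
Qed.

Lemma adjk_sym (V : finType) (Hs : seq {set V}) k u v : adjk Hs k u v -> adjk Hs k v u.
Proof. by case => uv [j hj]; split; [rewrite eq_sym | exists j; rewrite setUC]. Qed.

Lemma adjk_mono (V : finType) (Hs : seq {set V}) k k' u v : k <= k' -> adjk Hs k u v -> adjk Hs k' u v.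
Proof. by move=> kk [uv [j [jk js s]]]; split => //; exists j; split => //; apply: leq_trans kk. Qed.

Lemma adjk_U (V : finType) (Hs : seq {set V}) k u v : adjk Hs k u v -> u \in UU Hs k /\ v \in UU Hs k.
Proof.
case=> _ [j [jk js /subsetP s]]; split; apply/inU; exists j; split => //; apply: s; rewrite !inE eqxx ?orbT //.
Qed.

Lemma adjT_k (V : finType) (Hs : seq {set V}) u v : adjT Hs u v <-> adjk Hs (size Hs) u v.
Proof.
rewrite /adjT /Tedges inE cards2; split.
  case/andP => uv /(has_nthP set0) [j js s]; split; first by case: (u != v) uv.
  by exists j; split.
move=> [uv [j [_ js s]]]; rewrite uv /=; apply/(has_nthP set0); exists j => //.
Qed.

Lemma new_or_old (V : finType) (Hs : seq {set V}) k v : v \in UU Hs k.+1 ->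
  (v \in nth set0 Hs k /\ v \notin UU Hs k) \/ v \in UU Hs k.
Proof.
move=> vk1; case: (boolP (v \in UU Hs k)) => [h | nv]; [by right | left].
case/inU: vk1 => j [jk js vj]; split => //.
move: jk; rewrite ltnS leq_eqVlt => /orP [/eqP <- //|jk].
by case/negP: nv; apply/inU; exists j.
Qed.

Lemma step_new (V : finType) (Hs : seq {set V}) k v w :
  v \notin UU Hs k -> adjk Hs k.+1 v w -> w \in nth set0 Hs k.
Proof.
move=> nv [_ [j [jk js /subsetP s]]].
move: jk; rewrite ltnS leq_eqVlt => /orP [/eqP jk|jk].
  by subst j; apply: s; rewrite !inE eqxx orbT.
by case/negP: nv; apply/inU; exists j; split => //; apply: s; rewrite !inE eqxx.
Qed.

Lemma adjk_in (V : finType) (Hs : seq {set V}) k j u v :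
  u != v -> j < k -> j < size Hs -> u \in nth set0 Hs j -> v \in nth set0 Hs j -> adjk Hs k u v.
Proof.
move=> uv jk js uj vj; split => //; exists j; split => //.
by apply/subsetP => w; rewrite !inE => /orP [] /eqP ->.
Qed.

Lemma step_old (V : finType) r (Hs : seq {set V}) k u w : Kr_tree r Hs -> k < size Hs ->
  u \in UU Hs k -> w \in UU Hs k -> adjk Hs k.+1 u w -> adjk Hs k u w.
Proof.
move=> [_ [_ tr]] ks uk wk [uw [j [jk js s]]]; split => //.
move: jk; rewrite ltnS leq_eqVlt => /orP [/eqP jk|jk]; last by exists j.
subst j.
have k0 : 0 < k by case/inU: uk => j [] ; case: k {s ks js wk uw tr}.
have [e [_ [[j' [j'k ej']] eq]]] := tr k (introT andP (conj k0 ks)).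
exists j'; split => //; first by apply: leq_trans ks; apply: ltnW.
apply: subset_trans ej'; rewrite -eq /UU; apply/subsetP => x xs.
rewrite inE (subsetP s _ xs) /=.
by move: xs; rewrite !inE => /orP [] /eqP ->; rewrite -/(UU Hs k).
Qed.

Lemma L1a (V : finType) r (Hs : seq {set V}) i j : Kr_tree r Hs ->
  i < size Hs -> j < i -> #|nth set0 Hs i :&: nth set0 Hs j| <= 2.
Proof.
move=> tr iS ji; case: tr => [_ [_ tr]].
have i0 : 0 < i by case: i ji {iS}.
have [e [eP [_ eq]]] := tr i (introT andP (conj i0 iS)).
move: eP; rewrite inE => /andP [/eqP ce _].
rewrite -ce; apply: subset_leq_card; rewrite -eq; apply: setIS.
apply/subsetP => x xj; apply/inU; exists j; split => //.
by apply: ltn_trans iS.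
Qed.

Lemma L1 (V : finType) r (Hs : seq {set V}) i j : Kr_tree r Hs ->
  i < size Hs -> j < size Hs -> i != j -> #|nth set0 Hs i :&: nth set0 Hs j| <= 2.
Proof.
move=> tr iS js ij; case: (ltngtP i j) => h.
- by rewrite setIC; apply: L1a tr js h.
- by apply: L1a tr iS h.
- by rewrite h eqxx in ij.
Qed.

Lemma L2 (V : finType) r (Hs : seq {set V}) : Kr_tree r Hs -> forall k, k <= size Hs ->
  forall K : {set V}, 2 < #|K| -> {in K &, forall u v, u != v -> adjk Hs k u v} ->
  exists i, i < k /\ K \subset nth set0 Hs i.
Proof.
move=> tr; elim => [|k IH] ks K cK adjK.
  case/card_gt2P: cK => x [y [z [[xK yK _] [xy _ _]]]].
  by case: (adjK x y xK yK xy) => _ [j [] ].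
have partner : forall v, v \in K -> exists2 w, w \in K & v != w.
  move=> v vK; case/card_gt2P: cK => x [y [z [[xK yK zK] [xy yz zx]]]].
  case: (eqVneq v x) => [-> | vx]; last by exists x.
  by exists y.
case: (boolP [exists v in K, (v \in nth set0 Hs k) && (v \notin UU Hs k)]).
  case/exists_inP => v vK /andP [vk nv]; exists k; split => //.
  apply/subsetP => w wK; case: (eqVneq v w) => [<- // | vw].
  exact: step_new nv (adjK _ _ vK wK vw).
move/exists_inPn => old.
have oldU : forall v, v \in K -> v \in UU Hs k.
  move=> v vK; have [w wK vw] := partner v vK.
  case: (new_or_old (proj1 (adjk_U (adjK _ _ vK wK vw)))) => // [[vk nv]].
  by move: (old v vK); rewrite vk nv.
have [i [ik sub]] : exists i, i < k /\ K \subset nth set0 Hs i.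
  apply: IH => //; first by apply: ltnW.
  move=> u v uK vK uv; apply: (step_old tr ks (oldU _ uK) (oldU _ vK)).
  exact: adjK.
by exists i; split => //; apply: ltnW.
Qed.

Lemma L3 (V : finType) r (Hs : seq {set V}) : Kr_tree r Hs -> forall k, k <= size Hs ->
  forall a z1 b z2 : V, a != b -> z1 != z2 ->
  adjk Hs k a z1 -> adjk Hs k z1 b -> adjk Hs k b z2 -> adjk Hs k z2 a ->
  adjk Hs k a b \/ adjk Hs k z1 z2.
Proof.
move=> tr; elim => [|k IH] ks a z1 b z2 ab z12 h1 h2 h3 h4.
  by case: h1 => _ [j [] ].
have ks' : k < size Hs by [].
case: (new_or_old (proj1 (adjk_U h1))) => [[ak na] | ao].
  right; apply: (adjk_in z12 (ltnSn k) ks').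
  - exact: step_new na h1.
  - exact: step_new na (adjk_sym h4).
case: (new_or_old (proj1 (adjk_U h2))) => [[zk nz] | z1o].
  left; apply: (adjk_in ab (ltnSn k) ks').
  - exact: step_new nz (adjk_sym h1).
  - exact: step_new nz h2.
case: (new_or_old (proj1 (adjk_U h3))) => [[bk nb] | bo].
  right; apply: (adjk_in z12 (ltnSn k) ks').
  - exact: step_new nb (adjk_sym h2).
  - exact: step_new nb h3.
case: (new_or_old (proj1 (adjk_U h4))) => [[zk nz] | z2o].
  left; apply: (adjk_in ab (ltnSn k) ks').
  - exact: step_new nz h4.
  - exact: step_new nz (adjk_sym h3).
have := IH (ltnW ks) a z1 b z2 ab z12 (step_old tr ks' ao z1o h1) (step_old tr ks' z1o bo h2)
  (step_old tr ks' bo z2o h3) (step_old tr ks' z2o ao h4).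
by case => h; [left | right]; apply: adjk_mono h.
Qed.

Lemma adjT_neq (V : finType) (Hs : seq {set V}) u v : adjT Hs u v -> u != v.
Proof. by case/adjT_k. Qed.

Lemma adjT_sym (V : finType) (Hs : seq {set V}) u v : adjT Hs u v -> adjT Hs v u.
Proof. by rewrite /adjT setUC. Qed.

Lemma adjT_in (V : finType) (Hs : seq {set V}) i u v : u != v -> i < size Hs ->
  u \in nth set0 Hs i -> v \in nth set0 Hs i -> adjT Hs u v.
Proof. by move=> uv hi ui vi; apply/adjT_k; exact: (adjk_in uv hi hi ui vi). Qed.

Lemma Tverts_U (V : finType) (Hs : seq {set V}) : Tverts Hs = UU Hs (size Hs).
Proof. by rewrite /UU take_size. Qed.

Lemma adjT_Tv (V : finType) (Hs : seq {set V}) u v : adjT Hs u v -> v \in Tverts Hs.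
Proof. by rewrite Tverts_U => /adjT_k /adjk_U []. Qed.

Lemma nth_Tv (V : finType) (Hs : seq {set V}) i v : i < size Hs -> v \in nth set0 Hs i -> v \in Tverts Hs.
Proof. by move=> hi vi; rewrite Tverts_U; apply/inU; exists i. Qed.

Lemma clique_in (V : finType) r (Hs : seq {set V}) (K : {set V}) : Kr_tree r Hs -> 2 < #|K| ->
  {in K &, forall u v, u != v -> adjT Hs u v} ->
  exists i, i < size Hs /\ K \subset nth set0 Hs i.
Proof.
move=> tr cK h; apply: (L2 tr (leqnn _) cK) => u v uK vK uv.
by apply/adjT_k; apply: h.
Qed.

Lemma card3 (V : finType) (x y z : V) : x != y -> y != z -> z != x -> 2 < #|[set x; y; z]|.
Proof.
move=> xy yz zx; apply/card_gt2P; exists x, y, z; split; last by [].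
by rewrite !inE !eqxx ?orbT.
Qed.

Lemma D (V : finType) r (Hs : seq {set V}) a b c1 c2 c3 : Kr_tree r Hs -> a != b ->
  adjT Hs c1 c2 -> adjT Hs c1 c3 -> adjT Hs c2 c3 ->
  adjT Hs a c1 -> adjT Hs a c2 -> adjT Hs a c3 ->
  adjT Hs b c1 -> adjT Hs b c2 -> adjT Hs b c3 -> adjT Hs a b.
Proof.
move=> tr ab h12 h13 h23 ha1 ha2 ha3 hb1 hb2 hb3.
have k3 : 2 < #|[set c1; c2; c3]|.
  apply: card3; [exact: adjT_neq h12 | exact: adjT_neq h23 | rewrite eq_sym; exact: adjT_neq h13].
have sym := @adjT_sym V Hs.
have [i [hi si]] : exists i, i < size Hs /\ [set a; c1; c2; c3] \subset nth set0 Hs i.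
  apply: (clique_in tr); first by apply: leq_trans k3 _; apply: subset_leq_card; apply/subsetP => u; rewrite !inE -!orbA => ->; rewrite orbT.
  move=> u v; rewrite !inE -!orbA => /or4P [] /eqP -> /or4P [] /eqP ->; rewrite ?eqxx // => _; by auto.
have [j [hj sj]] : exists j, j < size Hs /\ [set b; c1; c2; c3] \subset nth set0 Hs j.
  apply: (clique_in tr); first by apply: leq_trans k3 _; apply: subset_leq_card; apply/subsetP => u; rewrite !inE -!orbA => ->; rewrite orbT.
  move=> u v; rewrite !inE -!orbA => /or4P [] /eqP -> /or4P [] /eqP ->; rewrite ?eqxx // => _; by auto.
case: (eqVneq i j) => [eij | nij].
  subst j; apply: (adjT_in ab hi); [apply: (subsetP si) | apply: (subsetP sj)]; by rewrite !inE eqxx.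
have := L1 tr hi hj nij; rewrite leqNgt; move/negP; case.
apply: leq_trans k3 _; apply: subset_leq_card; apply/subsetP => u.
rewrite !inE -!orbA => h; rewrite (subsetP si) ?(subsetP sj) // !inE -!orbA h ?orbT //.
Qed.

Lemma card_pair_sub (V : finType) (S : {set V}) a b : a != b -> a \in S -> b \in S ->
  #|S :\: [set a; b]| = #|S| - 2.
Proof.
move=> ab aS bS; rewrite cardsD (setIidPr _) ?cards2 ?ab //.
by apply/subsetP => u; rewrite !inE => /orP [] /eqP ->.
Qed.

Lemma card4_out (V : finType) (S : {set V}) a b c d : 4 < #|S| ->
  exists2 x, x \in S & x \notin [set a; b; c; d].
Proof.
move=> cS; apply/subsetPn/negP => sub.
have := subset_leq_card sub => h.
have : #|[set a; b; c; d]| <= 4.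
  apply: (leq_trans _ (card_size [:: a; b; c; d])).
  by apply: subset_leq_card; apply/subsetP=> u; rewrite !inE -!orbA.
lia.
Qed.

Lemma neq_of (V : finType) (B : {set V}) u v : u \notin B -> v \in B -> u != v.
Proof. by move=> uB vB; apply/eqP => h; rewrite h vB in uB. Qed.

Lemma card_sub3 (V : finType) (S : {set V}) x y z : x != y -> y != z -> z != x ->
  x \in S -> y \in S -> z \in S -> 2 < #|S|.
Proof. by move=> xy yz zx xS yS zS; apply/card_gt2P; exists x, y, z. Qed.

Lemma ar1 r n : 4 < r -> r - 2 <= n -> n <= r - 3 -> False.
Proof. lia. Qed.

Lemma ar2 r z y y' : z + y = r -> y = 1 + y' -> 2 < y -> y' <= 2 -> 1 < y' /\ z = r - 3.
Proof. lia. Qed.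
Lemma ar3 r z y y' : 4 < r -> z + y = r -> y' = y - 2 -> 2 < y -> y' <= 1 -> 1 < z /\ z = r - 3.
Proof. lia. Qed.
Lemma ar4 r z n : z = r - 3 -> 1 + z <= n -> n <= r - 3 -> False.
Proof. lia. Qed.
Lemma ar5 r z z' : 4 < r -> z = r - 3 -> z = 1 + z' -> z' = r - 4.
Proof. lia. Qed.

Lemma core (V : finType) r (Hs : seq {set V}) (A B X : {set V}) (a b : V) :
  5 <= r -> Kr_tree r Hs ->
  (forall z, z \in B -> z \in Tverts Hs -> z \in A) -> A \subset B ->
  (forall y, y \in X -> y \notin B -> y \in Tverts Hs) ->
  (~ exists v, bp_step r Hs A v) ->
  #|X| = r -> a \in X -> b \in X -> a != b -> ~ adjT Hs a b ->
  (forall p q, p \in X -> q \in X -> p != q -> [set p; q] != [set a; b] -> p \notin B -> adjT Hs p q) ->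
  ~ (a \in B /\ b \notin B) ->
  X \subset B.
Proof.
move=> r5 tr hBT hAB hXT term cX aX bX ab nab adjX wl.
pose I y := [set w in A | [set y; w] \in Tedges Hs].
have noU : forall y, y \in X -> y \notin B -> #|I y| <= r - 3.
  move=> y yX yB; rewrite leqNgt; apply/negP => h; apply: (term); exists y; left.
  split; [exact: hXT | by apply: contra yB; apply: (subsetP hAB) | ].
  rewrite /I in h; move: h r5; move: (#|[set w in A | [set y; w] \in Tedges Hs]|) => n; clear; lia.
have neq_e : forall p q, p \notin [set a; b] -> [set p; q] != [set a; b].
  move=> p q pe; apply/negP => /eqP h; move: pe; rewrite -h !inE eqxx //.
have neq_e' : forall p q, q \notin [set a; b] -> [set p; q] != [set a; b].
  by move=> p q qe; rewrite setUC; apply: neq_e.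
have adjY : forall p q, p \in X -> q \in X -> p \notin B -> p != q ->
    p \notin [set a; b] \/ q \notin [set a; b] -> adjT Hs p q.
  move=> p q pX qX pB pq [pe|qe]; apply: adjX => //; [exact: neq_e | exact: neq_e'].
have inI : forall y z, y \in X -> y \notin B -> z \in X -> z \in B ->
    (y \notin [set a; b] \/ z \notin [set a; b]) -> z \in I y.
  move=> y z yX yB zX zB h; have adj := adjY y z yX zX yB (neq_of yB zB) h.
  by rewrite inE (hBT z zB (adjT_Tv adj)); exact: adj.
have yA : forall y, y \notin B -> y \notin A.
  by move=> y; apply: contra; apply: (subsetP hAB).
apply/subsetP => x xX; apply/negPn/negP => xB.
have cYZ := cardsID B X; rewrite cX in cYZ.
have [y [yX yB ye]] : exists y, [/\ y \in X, y \notin B & y \notin [set a; b]].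
  case: (boolP [exists y in X, (y \notin B) && (y \notin [set a; b])]).
    by case/exists_inP => y yX /andP [yB ye]; exists y.
  move/exists_inPn => hno.
  have xe : x \in [set a; b].
    by move: (hno x xX); rewrite negb_and xB /= negbK.
  have key : forall p q, [set p; q] = [set a; b] -> p \in X -> p \notin B -> False.
    move=> p q pq pX pB.
    have sub : X :\: [set a; b] \subset I p.
      apply/subsetP => w; rewrite inE => /andP [we wX].
      have wB : w \in B by move: (hno w wX); rewrite negb_and we orbF negbK.
      by apply: inI => //; right.
    have := subset_leq_card sub; rewrite card_pair_sub // cX => h.
    exact: ar1 r5 h (noU p pX pB).
  move: xe; rewrite !inE => /orP [] /eqP xe; subst x.
  - by case: (key a b).
  - by case: (key b a) => //; rewrite setUC.
have ZI : X :&: B \subset I y.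
  by apply/subsetP => z; rewrite inE => /andP [zX zB]; apply: inI => //; left.
have cZ : #|X :&: B| <= r - 3 by apply: leq_trans (noU y yX yB); apply: subset_leq_card ZI.
have cY : 2 < #|X :\: B|.
  move: cZ cYZ r5; move: (#|X :&: B|) (#|X :\: B|) => m n; clear; lia.
case: (boolP (a \in B)) => aB.
  have bB : b \in B by apply/negPn/negP => bB; apply: wl.
  case/card_gt2P: cY => c1 [c2 [c3 [[c1i c2i c3i] [n12 n23 n31]]]].
  move: c1i c2i c3i; rewrite !inE => /andP [c1B c1X] /andP [c2B c2X] /andP [c3B c3X].
  have cne : forall c, c \notin B -> c \notin [set a; b].
    by move=> c cB; rewrite !inE negb_or (neq_of cB aB) (neq_of cB bB).
  apply: nab; apply: (@D _ _ _ a b c1 c2 c3 tr ab).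
  - by apply: adjY => //; left; apply: cne.
  - by apply: adjY => //; [rewrite eq_sym | left; apply: cne].
  - by apply: adjY => //; left; apply: cne.
  - by apply: adjT_sym; apply: adjY => //; [exact: neq_of aB | left; apply: cne].
  - by apply: adjT_sym; apply: adjY => //; [exact: neq_of aB | left; apply: cne].
  - by apply: adjT_sym; apply: adjY => //; [exact: neq_of aB | left; apply: cne].
  - by apply: adjT_sym; apply: adjY => //; [exact: neq_of bB | left; apply: cne].
  - by apply: adjT_sym; apply: adjY => //; [exact: neq_of bB | left; apply: cne].
  - by apply: adjT_sym; apply: adjY => //; [exact: neq_of bB | left; apply: cne].

case: (boolP (b \in B)) => bB.
  have aY : a \in X :\: B by rewrite inE aB aX.
  have hY := cardsD1 a (X :\: B); rewrite aY in hY.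
  have cnot : forall c, c \in (X :\: B) :\ a -> [/\ c \in X, c \notin B, c != a & c \notin [set a; b]].
    move=> c; rewrite !inE => /andP [ca /andP [cB cX']]; split => //.
    by rewrite negb_or ca (neq_of cB bB).
  have sym := @adjT_sym V Hs.
  case: (ltnP 2 #|(X :\: B) :\ a|) => c3.
    case/card_gt2P: c3 => c1 [c2 [c3 [[c1i c2i c3i] [n12 n23 n31]]]].
    have [c1X c1B c1a c1e] := cnot c1 c1i.
    have [c2X c2B c2a c2e] := cnot c2 c2i.
    have [c3X c3B c3a c3e] := cnot c3 c3i.
    apply: nab; apply: (@D _ _ _ a b c1 c2 c3 tr ab).
    - by apply: adjY => //; left.
    - by apply: adjY => //; [rewrite eq_sym | left].
    - by apply: adjY => //; left.
    - by apply: sym; apply: adjY => //; left.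
    - by apply: sym; apply: adjY => //; left.
    - by apply: sym; apply: adjY => //; left.
    - by apply: sym; apply: adjY => //; [exact: neq_of bB | left].
    - by apply: sym; apply: adjY => //; [exact: neq_of bB | left].
    - by apply: sym; apply: adjY => //; [exact: neq_of bB | left].
  have [c2' cZ3] := ar2 cYZ hY cY c3.
  case/card_gt1P: c2' => y1 [y2 [y1i y2i n12]].
  have [y1X y1B y1a y1e] := cnot y1 y1i.
  have [y2X y2B y2a y2e] := cnot y2 y2i.
  have adj12 : adjT Hs y1 y2 := adjY y1 y2 y1X y2X y1B n12 (or_introl y1e).
  have adja1 : adjT Hs a y1 := sym _ _ (adjY y1 a y1X aX y1B y1a (or_introl y1e)).
  have adja2 : adjT Hs a y2 := sym _ _ (adjY y2 a y2X aX y2B y2a (or_introl y2e)).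
  have [i [hi Ki]] : exists i, i < size Hs /\ [set a; y1; y2] \subset nth set0 Hs i.
    apply: (clique_in tr); first by apply: card3 => //; rewrite eq_sym.
    move=> u v; rewrite !inE -!orbA => /or3P [] /eqP -> /or3P [] /eqP ->; rewrite ?eqxx // => _; first [assumption | apply: sym; assumption].
  have ai : a \in nth set0 Hs i by apply: (subsetP Ki); rewrite !inE eqxx.
  have y1i' : y1 \in nth set0 Hs i by apply: (subsetP Ki); rewrite !inE eqxx ?orbT.
  have y2i' : y2 \in nth set0 Hs i by apply: (subsetP Ki); rewrite !inE eqxx ?orbT.
  have bi : b \notin nth set0 Hs i.
    by apply/negP => bi; apply: nab; apply: (adjT_in ab hi ai bi).
  have Zb : forall z, z \in X -> z \in B -> z != b -> z \in nth set0 Hs i.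
    move=> z zX zB zb.
    have ze : z \notin [set a; b] by rewrite !inE negb_or eq_sym (neq_of aB zB) zb.
    have az : adjT Hs a z := adjY a z aX zX aB (neq_of aB zB) (or_intror ze).
    have y1z : adjT Hs y1 z := adjY y1 z y1X zX y1B (neq_of y1B zB) (or_introl y1e).
    have y2z : adjT Hs y2 z := adjY y2 z y2X zX y2B (neq_of y2B zB) (or_introl y2e).
    have [k [hk Kk]] : exists k, k < size Hs /\ [set a; y1; y2; z] \subset nth set0 Hs k.
      apply: (clique_in tr).
        by apply: (@card_sub3 _ _ a y1 y2); rewrite ?inE ?eqxx ?orbT // eq_sym.
      move=> u v; rewrite !inE -!orbA => /or4P [] /eqP -> /or4P [] /eqP ->; rewrite ?eqxx // => _; first [assumption | apply: sym; assumption].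
    case: (eqVneq i k) => [-> | ik]; first by apply: (subsetP Kk); rewrite !inE eqxx !orbT.
    exfalso; have := L1 tr hi hk ik; rewrite leqNgt; move/negP; apply.
    apply: (@card_sub3 _ _ a y1 y2) => //; first by rewrite eq_sym.
    - by rewrite inE ai (subsetP Kk) // !inE eqxx.
    - by rewrite inE y1i' (subsetP Kk) // !inE eqxx ?orbT.
    - by rewrite inE y2i' (subsetP Kk) // !inE eqxx ?orbT.
  have [j [hj Kj]] : exists j, j < size Hs /\ [set y1; y2; b] \subset nth set0 Hs j.
    have y1b : adjT Hs y1 b := adjY y1 b y1X bX y1B (neq_of y1B bB) (or_introl y1e).
    have y2b : adjT Hs y2 b := adjY y2 b y2X bX y2B (neq_of y2B bB) (or_introl y2e).
    apply: (clique_in tr); first by apply: card3 => //; [exact: neq_of bB | rewrite eq_sym; exact: neq_of bB].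
    move=> u v; rewrite !inE -!orbA => /or3P [] /eqP -> /or3P [] /eqP ->; rewrite ?eqxx // => _; first [assumption | apply: sym; assumption].
  have bj : b \in nth set0 Hs j by apply: (subsetP Kj); rewrite !inE eqxx ?orbT.
  have y1j : y1 \in nth set0 Hs j by apply: (subsetP Kj); rewrite !inE eqxx ?orbT.
  have y2j : y2 \in nth set0 Hs j by apply: (subsetP Kj); rewrite !inE eqxx ?orbT.
  have ij : i != j by apply/eqP => eij; subst j; rewrite bj in bi.
  have ZI1 : X :&: B \subset I y1.
    by apply/subsetP => z; rewrite inE => /andP [zX zB]; apply: inI => //; left.
  have inA : forall z, z \in X :&: B -> z \in A.
    by move=> z /(subsetP ZI1); rewrite inE => /andP [].
  have big : forall h, h \in A -> h \notin X :&: B -> adjT Hs y1 h -> False.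
    move=> h hA hZ adj.
    have sub : h |: (X :&: B) \subset I y1.
      apply/subsetP => w; rewrite in_setU1 => /orP [/eqP -> | wZ]; last exact: (subsetP ZI1).
      by rewrite inE hA; exact: adj.
    have := subset_leq_card sub; rewrite cardsU1 hZ => h1.
    exact: ar4 cZ3 h1 (noU y1 y1X y1B).
  have HiA : nth set0 Hs i :&: A = (X :&: B) :\ b.
    apply/eqP; rewrite eqEsubset; apply/andP; split; apply/subsetP => h.
      move/setIP => [hi' hA]; case: (boolP (h \in X :&: B)) => hZ.
        rewrite in_setD1 hZ andbT; apply/eqP => hb; subst h; by rewrite hi' in bi.
      exfalso; apply: (big h hA hZ); apply: (adjT_in _ hi y1i' hi').
      exact: neq_of (yA _ y1B) hA.
    rewrite in_setD1 => /andP [hb hZ]; rewrite inE (inA _ hZ) andbT.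
    by move: hZ; rewrite inE => /andP [hX hB]; apply: Zb.
  have bZ : b \in X :&: B by rewrite inE bX bB.
  have HjA : nth set0 Hs j :&: A = [set b].
    apply/eqP; rewrite eqEsubset; apply/andP; split; apply/subsetP => h; last first.
      by rewrite inE => /eqP ->; rewrite inE bj inA.
    move/setIP => [hj' hA]; rewrite inE; apply/negPn/negP => hb.
    case: (boolP (h \in X :&: B)) => hZ.
      have hi' : h \in nth set0 Hs i by move: hZ; rewrite inE => /andP [hX hB]; apply: Zb.
      have := L1 tr hi hj ij; rewrite leqNgt; move/negP; apply.
      apply: (@card_sub3 _ _ y1 y2 h) => //.
      - exact: neq_of (yA _ y2B) hA.
      - rewrite eq_sym; exact: neq_of (yA _ y1B) hA.
      - by rewrite inE y1i' y1j.
      - by rewrite inE y2i' y2j.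
      - by rewrite inE hi' hj'.
    apply: (big h hA hZ); apply: (adjT_in _ hj y1j hj').
    exact: neq_of (yA _ y1B) hA.
  have cZb := cardsD1 b (X :&: B); rewrite bZ in cZb.
  apply: (term); exists y1; right; split.
    by move=> [w hw]; apply: (term); exists w; left.
  exists [set y1; y2], i, j.
  have fi : [set y1; y2] \subset nth set0 Hs i.
    by apply/subsetP => u; rewrite !inE => /orP [] /eqP ->.
  have fj : [set y1; y2] \subset nth set0 Hs j.
    by apply/subsetP => u; rewrite !inE => /orP [] /eqP ->.
  have ij' : i <> j by apply/eqP.
  split; first by split; [exact: adj12 | exists i, j; split].
  do 5 (split; first by []).
  split; first by rewrite HiA; exact: ar5 r5 cZ3 cZb.
  split; first by rewrite HjA cards1.
  split; last by rewrite !inE eqxx.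
  rewrite HiA HjA disjoint_subset; apply/subsetP => u hu; rewrite inE; apply/negP => hf.
  have uB : u \in B.
    move: hu; rewrite !inE => /orP [/andP [_ /andP [_ ->]] // | /eqP ->]; exact: bB.
  by move: hf; rewrite !inE => /orP [] /eqP hu'; subst u; [rewrite uB in y1B | rewrite uB in y2B].
have sym := @adjT_sym V Hs.
have aY : a \in X :\: B by rewrite inE aB aX.
have bY : b \in X :\: B by rewrite inE bB bX.
have hY := card_pair_sub ab aY bY.
have cnot : forall c, c \in (X :\: B) :\: [set a; b] -> [/\ c \in X, c \notin B & c \notin [set a; b]].
  by move=> c; rewrite inE => /andP [ce]; rewrite inE => /andP [cB cX'].
have ye' : y \notin [set a; b] := ye.
have ya : y != a by move: ye; rewrite !inE negb_or => /andP [].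
have yb : y != b by move: ye; rewrite !inE negb_or => /andP [].
case: (ltnP 1 #|(X :\: B) :\: [set a; b]|) => c2.
  case/card_gt1P: c2 => y1 [y2 [y1i y2i n12]].
  have [y1X y1B y1e] := cnot y1 y1i.
  have [y2X y2B y2e] := cnot y2 y2i.
  have [c cX' cn] := card4_out a b y1 y2 (ltac:(rewrite cX; exact: r5) : 4 < #|X|).
  move: cn; rewrite !inE !negb_or -!andbA => /and4P [ca cb cy1 cy2].
  have ce : c \notin [set a; b] by rewrite !inE negb_or ca cb.
  have y1a : y1 != a by move: y1e; rewrite !inE negb_or => /andP [].
  have y1b : y1 != b by move: y1e; rewrite !inE negb_or => /andP [].
  have y2a : y2 != a by move: y2e; rewrite !inE negb_or => /andP [].
  have y2b : y2 != b by move: y2e; rewrite !inE negb_or => /andP [].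
  apply: nab; apply: (@D _ _ _ a b y1 y2 c tr ab).
  - by apply: adjY => //; left.
  - by apply: adjY => //; [rewrite eq_sym | left].
  - by apply: adjY => //; [rewrite eq_sym | left].
  - by apply: adjY => //; [rewrite eq_sym | right].
  - by apply: adjY => //; [rewrite eq_sym | right].
  - by apply: adjY => //; [rewrite eq_sym | right].
  - by apply: adjY => //; [rewrite eq_sym | right].
  - by apply: adjY => //; [rewrite eq_sym | right].
  - by apply: adjY => //; [rewrite eq_sym | right].
have [cz2 cZ3] := ar3 r5 cYZ hY cY c2.
case/card_gt1P: cz2 => z1 [z2 [z1i z2i n12]].
move: z1i z2i; rewrite !inE => /andP [z1X z1B] /andP [z2X z2B].
have z1e : z1 \notin [set a; b] by rewrite !inE negb_or eq_sym (neq_of aB z1B) eq_sym (neq_of bB z1B).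
have z2e : z2 \notin [set a; b] by rewrite !inE negb_or eq_sym (neq_of aB z2B) eq_sym (neq_of bB z2B).
have az1 : adjT Hs a z1 := adjY a z1 aX z1X aB (neq_of aB z1B) (or_intror z1e).
have az2 : adjT Hs a z2 := adjY a z2 aX z2X aB (neq_of aB z2B) (or_intror z2e).
have bz1 : adjT Hs b z1 := adjY b z1 bX z1X bB (neq_of bB z1B) (or_intror z1e).
have bz2 : adjT Hs b z2 := adjY b z2 bX z2X bB (neq_of bB z2B) (or_intror z2e).
have z12 : adjT Hs z1 z2.
  have := L3 tr (leqnn _) ab n12 (proj1 (adjT_k _ _ _) az1) (proj1 (adjT_k _ _ _) (sym _ _ bz1))
    (proj1 (adjT_k _ _ _) bz2) (proj1 (adjT_k _ _ _) (sym _ _ az2)).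
  by case => /adjT_k h //; case: nab.
apply: nab; apply: (@D _ _ _ a b y z1 z2 tr ab).
- by apply: adjY => //; [exact: neq_of z1B | left].
- by apply: adjY => //; [exact: neq_of z2B | left].
- exact: z12.
- by apply: adjY => //; [rewrite eq_sym | right].
- exact: az1.
- exact: az2.
- by apply: adjY => //; [rewrite eq_sym | right].
- exact: bz1.
- exact: bz2.
Qed.


Lemma completesB (V : finType) r (Hs : seq {set V}) (VG A : {set V}) (EG : {set {set V}})
  (E : {set {set V}}) (e X : {set V}) :
  5 <= r -> Kr_tree r Hs -> is_graph VG EG ->
  VG :&: Tverts Hs \subset A ->
  (~ exists v, bp_step r Hs A v) ->
  Tedges Hs \subset E ->
  (forall f, f \in E -> [\/ f \in EG, f \in Tedges Hs | f \subset VG :|: A]) ->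
  dyn_completes r (VG :|: Tverts Hs) E e X -> X \subset VG :|: A.
Proof.
move=> r5 tr isG SA term TE inv [XW cX eP eE fE].
have hBT : forall z, z \in VG :|: A -> z \in Tverts Hs -> z \in A.
  move=> z; rewrite inE => /orP [zG zT | //]; apply: (subsetP SA); by rewrite inE zG zT.
have hAB : A \subset VG :|: A by apply: subsetUr.
have hXT : forall y, y \in X -> y \notin VG :|: A -> y \in Tverts Hs.
  move=> y yX; rewrite inE negb_or => /andP [yG _].
  by move: (subsetP XW y yX); rewrite inE (negbTE yG).
move: eP; rewrite inE => /andP [/cards2P [a [b [ab ee]]] eX]; subst e.
have main : forall p q, [set p; q] = [set a; b] -> ~ (p \in VG :|: A /\ q \notin VG :|: A) ->
    X \subset VG :|: A.
  move=> p q pq wl.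
  have pX : p \in X by apply: (subsetP eX); rewrite -pq !inE eqxx.
  have qX : q \in X by apply: (subsetP eX); rewrite -pq !inE eqxx orbT.
  have pqn : p != q by apply/negP => /eqP h; move: ab; subst q; rewrite setUid in pq;
    have := cards1 p; rewrite pq cards2 => h; move/eqP: h; case: (a != b).
  apply: (core r5 tr hBT hAB hXT term cX pX qX pqn).
  - move=> h; case/negP: eE; rewrite -pq; exact: (subsetP TE).
  - move=> u v uX vX uv uvpq uB.
    have fin : [set u; v] \in E.
      apply: fE; first by rewrite inE cards2 uv /=; apply/subsetP => w; rewrite !inE => /orP [] /eqP ->.
      by rewrite -pq.
    case: (inv _ fin) => [fG | fT | fB] //.
    + have [_ /subsetP s] := isG _ fG.
      by case/negP: uB; rewrite inE s // !inE eqxx.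
    + by case/negP: uB; apply: (subsetP fB); rewrite !inE eqxx.
  - exact: wl.
case: (boolP ((a \in VG :|: A) && (b \notin VG :|: A))) => h.
  apply: (main b a); first by rewrite setUC.
  by case/andP: h => _ hb [hb' _]; rewrite hb' in hb.
by apply: (main a b) => // [[h1 h2]]; rewrite h1 h2 in h.
Qed.

Lemma inv_path (V : finType) r (Hs : seq {set V}) (VG A : {set V}) (EG : {set {set V}}) :
  5 <= r -> Kr_tree r Hs -> is_graph VG EG ->
  VG :&: Tverts Hs \subset A ->
  (~ exists v, bp_step r Hs A v) ->
  forall es (E : {set {set V}}),
  Tedges Hs \subset E ->
  (forall f, f \in E -> [\/ f \in EG, f \in Tedges Hs | f \subset VG :|: A]) ->
  dyn_path r (VG :|: Tverts Hs) E es ->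
  Tedges Hs \subset E :|: [set x in es] /\
  (forall f, f \in E :|: [set x in es] -> [\/ f \in EG, f \in Tedges Hs | f \subset VG :|: A]).
Proof.
move=> r5 tr isG SA term; elim => [|e es IH] E TE inv /=.
  have -> : E :|: [set x in [::]] = E by apply/setP => f; rewrite !inE orbF.
  by [].
move=> [[X comp] path].
have XB := completesB r5 tr isG SA term TE inv comp.
have eB : e \subset VG :|: A.
  by case: comp => _ _ eP _ _; move: eP; rewrite inE => /andP [_ /subsetP s];
    apply/subsetP => u /s /(subsetP XB).
have -> : E :|: [set x in e :: es] = (e |: E) :|: [set x in es].
  by apply/setP => f; rewrite !inE; case: (f == e); rewrite ?orbT.
apply: IH => //.
  by apply: subset_trans TE _; apply: subsetUr.
move=> f /setU1P [-> | fE]; [by constructor 3 | exact: inv].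
Qed.

Unset Implicit Arguments.

Theorem corollary6p4 (V : finType) (r : nat) (Hs : seq {set V})
    (VG : {set V}) (EG : {set {set V}}) :
  5 <= r -> Kr_tree r Hs -> is_graph VG EG ->
  forall A : {set V}, bp_run r Hs (VG :&: Tverts Hs) A ->
  forall X : {set V},
    completed_copy r (VG :|: Tverts Hs) (EG :|: Tedges Hs) X ->
    X \subset VG :|: A.
Proof.
move=> r5 tr isG A [vs [_ eA term]] X [es [e [path comp]]].
have SA : VG :&: Tverts Hs \subset A by rewrite eA; apply: subsetUl.
have TE : Tedges Hs \subset EG :|: Tedges Hs by apply: subsetUr.
have inv0 : forall f, f \in EG :|: Tedges Hs -> [\/ f \in EG, f \in Tedges Hs | f \subset VG :|: A].
  by move=> f; rewrite inE => /orP [h | h]; [constructor 1 | constructor 2].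
have [TE' inv'] := inv_path r5 tr isG SA term TE inv0 path.
exact: completesB r5 tr isG SA term TE' inv' comp.
Qed.
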